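(* Let $p$ be a prime, let $P$ be a finite $p$-group, and let $a\in P$ have order $p$. Assume there exists an elementary abelian subgroup of $P$ which is normalized but not centralized by $a$. Then there is an elementary abelian subgroup $X$ of $P$ of order $p^2$ such that $|a^P\cap X|=p$ and $X\cap P'\neq 1$.
   Context: $a^P$ denotes the conjugacy class of $a$ in $P$, and $P'$ the derived subgroup of $P$. *)

(* Defs.v *)
From mathcomp Require Import all_boot all_fingroup all_solvable.

(* Main.v *)
Require Import Defs.
From mathcomp Require Import all_boot all_fingroup all_solvable.
Set Implicit Arguments. Unset Strict Implicit.
Local Open Scope group_scope.

Lemma descent (gT : finGroupType) (P : {group gT}) (a g h : gT) (k : nat) :
  nilpotent P -> a \in P -> g \in P -> h \in P -> a ^ h = [~ a, g] ^+ k -> a = 1.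
Proof.
move=> nilP Pa Pg Ph E.
have L : forall n, a \in 'L_n.+1(P).
  elim=> [|n IH]; first by rewrite lcn1.
  have nL : h \in 'N('L_n.+2(P)) by apply: (subsetP (lcn_norm _ _)).
  rewrite -(memJ_norm a nL) E; apply: groupX.
  by apply: (subsetP (lcnSnS n.+1 P)); rewrite mem_commg.
have [n Ln] := lcnP _ nilP.
by move: (L n); rewrite Ln inE => /eqP.
Qed.

Lemma conj_pow (gT : finGroupType) (a x f : gT) :
  a ^ x = a * f -> commute x f -> forall m, a ^ (x ^+ m) = a * f ^+ m.
Proof.
move=> E cxf; elim=> [|m IH]; first by rewrite !expg0 conjg1 mulg1.
rewrite expgSr conjgM IH conjMg E -mulgA expgS; congr (_ * (_ * _)).
by apply/conjg_fixP/commgP; apply: commute_sym; apply: commuteX.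
Qed.

Theorem lemma2p3 (gT : finGroupType) (p : nat) (P : {group gT}) (a : gT) :
  prime p -> (p.-group P)%g -> a \in P -> #[a]%g = p ->
  (exists E : {group gT},
      [/\ (E \subset P)%g, (p.-abelem E)%g, a \in 'N(E)%g & a \notin 'C(E)%g]) ->
  exists X : {group gT},
    [/\ (X \subset P)%g, (p.-abelem X)%g, #|X| = (p ^ 2)%N,
        #|((a ^: P) :&: X)%g| = p & (X :&: P^`(1) != 1)%g].
Proof.
move=> pr pP Pa oa [E [sEP abelE nEa ncEa]].
have nilP := pgroup_nil pP.
have abE : abelian E by case/and3P: abelE.
have EP : forall y, y \in E -> y \in P by apply/subsetP.
have aE : a \notin E.
  by apply: contra ncEa => Ea; apply: (subsetP abE).
move: ncEa; rewrite -sub_cent1 => /subsetPn [x0 Ex0 nx0].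
pose it k := iter k (fun y => [~ y, a]) x0.
have itE : forall k, it k \in E.
  elim=> [|k IH] //=; rewrite commgEl groupM ?groupV //.
  by rewrite memJ_norm.
have itL : forall k, it k \in 'L_k.+1(P).
  elim=> [|k IH]; first by rewrite lcn1 /= EP.
  by apply: (subsetP (lcnSnS k.+1 P)); rewrite /= mem_commg.
have exn : exists n, it n == 1.
  have [n Ln] := lcnP _ nilP.
  by exists n; move: (itL n); rewrite Ln inE.
case: (ex_minnP exn) => m itm minm.
have x0n1 : x0 != 1 by apply: contra nx0 => /eqP ->; rewrite group1.
have it1 : it 1%N != 1 by apply: contra nx0 => /commgP /cent1P.
have [j mj] : exists j, m = j.+2.
  case: m itm minm => [|[|j]] itm minm; last by exists j.
  - by rewrite itm in x0n1.
  - by rewrite itm in it1.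
pose x := it j.
pose y := it j.+1.
have yn1 : y != 1.
  apply/negP => y1; have := minm _ y1; rewrite mj; by rewrite ltnn.
have ya : commute y a by apply/commgP; move: itm; rewrite mj.
pose f := [~ a, x].
have fy : f = y^-1 by rewrite /f /y /= invg_comm.
have fn1 : f != 1 by rewrite fy eq_invg1.
have Ex : x \in E by apply: itE.
have Ef : f \in E by rewrite fy groupV itE.
have Df : f \in P^`(1) by rewrite derg1 mem_commg // EP.
have af : commute a f by rewrite fy; apply: commuteV; apply: commute_sym.
have xf : commute x f by apply: (centsP abE).
have axf : a ^ x = a * f by rewrite /f commgEl mulKVg.
have ofo : #[f] = p by apply: (abelem_order_p abelE).
have cfa : <[f]> \subset 'C(<[a]>) by rewrite cent_cycle cycle_subG; apply/cent1P; apply: commute_sym.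
pose X := (<[a]> <*> <[f]>)%G.
have XE : X :=: <[a]> * <[f]> by apply: cent_joinEr.
have TI : <[a]> :&: <[f]> = 1.
  apply: prime_TIg; first by rewrite -/(#[a]) oa.
  by rewrite cycle_subG; apply: contra aE; apply: (subsetP); rewrite cycle_subG.
have cX : #|X| = (p ^ 2)%N by rewrite XE TI_cardMg // -/(#[a]) -/(#[f]) oa ofo mulnn.
have sXP : X \subset P by rewrite join_subG !cycle_subG Pa EP.
have fX : f \in X by apply: (subsetP (joing_subr _ _)); apply: cycle_id.
have cwa : forall w, w \in <[f]> -> commute w a.
  move=> w Hw; apply/cent1P; rewrite -cent_cycle; exact: (subsetP cfa).
have cos : forall w, w \in <[f]> -> exists m, a * w = a ^ (x ^+ m).
  by move=> w /cycleP [n ->]; exists n; rewrite (conj_pow axf xf).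
have claim : (a ^: P) :&: X = a *: <[f]>.
  apply/setP => u; rewrite inE mem_lcoset; apply/andP/idP.
  - case=> /imsetP [g Pg ->]; rewrite XE => /mulsgP [v w Hv Hw E1].
    move: Hv => /cycleP [i Ev]; subst v.
    set d := (#[a].-1 + i)%N.
    have Ed : a^-1 * a ^+ i = a ^+ d by rewrite invg_expg -expgD.
    have Hc : [~ a, g] = a ^+ d * w by rewrite commgEl E1 mulgA Ed.
    case: (boolP (p %| d)) => pd.
    + have ad1 : a ^+ d = 1 by apply/eqP; rewrite -order_dvdn oa.
      by rewrite E1 mulgA Ed ad1 mul1g.
    + exfalso.
      have gen : a \in <[a ^+ d]>.
        have : generator <[a]> (a ^+ d) by rewrite generator_coprime oa prime_coprime.
        by move/eqP <-; apply: cycle_id.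
      case/cycleP: gen => k Ek.
      have [n Em] := cos _ (groupX k Hw).
      have : a ^ (x ^+ n) = [~ a, g] ^+ k.
        rewrite -Em Hc expgMn -?Ek //.
        by apply: commute_sym; apply: commuteX; apply: cwa.
      move/(descent nilP Pa Pg (groupX n (EP _ Ex))) => a1.
      by move: pr; rewrite -oa a1 order1.
  - move=> Hu; have [n Em] := cos _ Hu.
    rewrite -(mulKVg a u) Em; split; first by apply: memJ_class; rewrite groupX // EP.
    by rewrite -Em XE mem_mulg // cycle_id.
exists X; split => //.
- rewrite abelemE // abelianY !cycle_abelian cfa /=.
  apply/exponentP => u; rewrite XE => /mulsgP [v w Hv Hw ->].
  rewrite expgMn; last first.
    by apply: commute_sym; apply/cent1P; rewrite -cent_cycle (subsetP (centsS _ cfa)) // ?cycle_subG ?cycle_id.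
  have v1 : v ^+ p = 1 by apply/eqP; rewrite -order_dvdn -oa (order_dvdG Hv).
  have w1 : w ^+ p = 1 by apply/eqP; rewrite -order_dvdn -ofo (order_dvdG Hw).
  by rewrite v1 w1 mulg1.
- by rewrite claim card_lcoset -/(#[f]) ofo.
- by apply/trivgPn; exists f; rewrite // inE fX Df.
Qed.
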